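(* Let $\mathbb{X},\mathbb{Y}$ be finite-dimensional real Banach spaces, $T\in\mathbb{L}(\mathbb{X},\mathbb{Y})$, and let $F$ be a face of $B_{\mathbb{X}}$ with $T(F)\neq\{0\}$. Then $T$ preserves parallel pairs contained in $F$ (i.e. $(Tx,Ty)$ is a parallel pair in $\mathbb{Y}$ for all $x,y\in F$) if and only if one of the following holds: (i) $\dim(\mathrm{span}\,T(F))=1$; (ii) there exists $u\in F$ such that $J(Tu)\subset J(Tv)$ for all $v\in F\setminus\ker T$.
   Context: A face of $B_{\mathbb{X}}$ is a nonempty convex subset $F\subset S_{\mathbb{X}}$ such that whenever $x_1,x_2\in S_{\mathbb{X}}$, $0<t<1$ and $(1-t)x_1+tx_2\in F$, then $x_1,x_2\in F$. For non-zero $y$, $J(y)=\{g\in S_{\mathbb{Y}^*}: g(y)=\|y\|\}$. $(x,y)$ is a parallel pair if $\|x+\lambda y\|=\|x\|+\|y\|$ for some scalar $\lambda$ with $|\lambda|=1$. *)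

(* Defs.v *)
From HB Require Import structures.
From mathcomp Require Import all_boot all_order all_algebra.
From mathcomp Require Import all_classical all_reals all_analysis.
Unset Printing Implicit Defensive.
Import Order.TTheory GRing.Theory Num.Theory.
Import numFieldNormedType.Exports.
Local Open Scope classical_set_scope.
Local Open Scope ring_scope.

Section Defs.
Context {R : realType}.

Definition finite_dim (X : normedModType R) : Prop :=
  exists (n : nat) (e : 'I_n -> X),
    forall x : X, exists c : 'I_n -> R, x = \sum_(i < n) c i *: e i.

Definition unit_sphere (X : normedModType R) : set X := [set x | `|x| = 1].

Definition convex_set (X : normedModType R) (F : set X) : Prop :=
  forall x y t, F x -> F y -> 0 <= t <= 1 -> F ((1 - t) *: x + t *: y).

Definition is_face (X : normedModType R) (F : set X) : Prop :=
  [/\ F !=set0, F `<=` unit_sphere X, @convex_set X F &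
    forall x1 x2 t, unit_sphere X x1 -> unit_sphere X x2 -> 0 < t < 1 ->
      F ((1 - t) *: x1 + t *: x2) -> F x1 /\ F x2].

Definition span_set (X : normedModType R) (S : set X) : set X :=
  [set x | exists (n : nat) (c : 'I_n -> R) (v : 'I_n -> X),
     (forall i, S (v i)) /\ x = \sum_(i < n) c i *: v i].

Definition span_dim1 (X : normedModType R) (S : set X) : Prop :=
  exists e : X, e != 0 /\ @span_set X S = [set a *: e | a in [set: R]].

Definition dual_norm (Y : normedModType R) (g : Y -> R) : R :=
  sup [set `|g z| | z in [set z : Y | `|z| <= 1]].

Definition dual_unit (Y : normedModType R) (g : Y -> R) : Prop :=
  [/\ (forall (a : R) (u v : Y), g (a *: u + v) = a * g u + g v),
      continuous g & @dual_norm Y g = 1].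

Definition Jset (Y : normedModType R) (y : Y) : set (Y -> R) :=
  [set g | @dual_unit Y g /\ g y = `|y|].

Definition parallel_pair (X : normedModType R) (x y : X) : Prop :=
  exists lambda : R, `|lambda| = 1 /\ `|x + lambda *: y| = `|x| + `|y|.

End Defs.
Arguments finite_dim {R}.
Arguments is_face {R X}.
Arguments span_dim1 {R X}.
Arguments Jset {R Y}.
Arguments parallel_pair {R X}.

(* Main.v *)
Require Import Defs.
From mathcomp Require Import all_boot all_order all_algebra.
From mathcomp Require Import all_classical all_reals all_analysis.
From mathcomp Require Import ring lra.
Import Order.TTheory GRing.Theory Num.Theory.
Import numFieldNormedType.Exports.
Local Open Scope classical_set_scope.
Local Open Scope ring_scope.
Section Gen.
Variables (R : realType) (Y : normedModType R).
Implicit Types (y z w : Y).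

Definition Pp y z := `|y + z| = `|y| + `|z|.

Lemma par_cases {y z} : parallel_pair y z -> Pp y z \/ `|y - z| = `|y| + `|z|.
Proof.
case=> l [hl h]; have [l0|l0] := leP 0 l.
- left.
  have e : l = 1 by rewrite -hl ger0_norm.
  by move: h; rewrite e scale1r.
- right.
  have e : l = -1 by rewrite -[l]opprK -hl ltr0_norm.
  by move: h; rewrite e scaleN1r.
Qed.

Lemma PpC {y z} : Pp y z -> Pp z y.
Proof. by rewrite /Pp addrC => ->; rewrite addrC. Qed.

Lemma F2 y z a b : Pp y z -> 0 <= a -> 0 <= b ->
  `|a *: y + b *: z| = a * `|y| + b * `|z|.
Proof.
wlog ab : y z a b / b <= a.
  move=> H Pyz a0 b0; have [ba|ab] := leP b a; first exact: H.
  rewrite addrC H ?(ltW ab) //; [by rewrite addrC | exact: PpC].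
move=> Pyz a0 b0; apply/le_anti/andP; split.
  by apply: (le_trans (ler_normD _ _)); rewrite !normrZ !ger0_norm.
have h := ler_normD (a *: y + b *: z) ((a - b) *: z).
have e : a *: y + b *: z + (a - b) *: z = a *: (y + z).
  by rewrite scalerBl -addrA [b *: z + _]addrC subrK scalerDr.
move: h; rewrite e !normrZ (ger0_norm a0) Pyz ger0_norm ?subr_ge0 //.
move=> h; rewrite mulrDr mulrBl in h; lra.
Qed.

Lemma Pp0l z : Pp 0 z.
Proof. by rewrite /Pp add0r normr0 add0r. Qed.

Lemma combo1 y z (t : R) : y - ((1 - t) *: y + t *: z) = t *: (y - z).
Proof. by rewrite scalerBr scalerBl scale1r opprD opprB addrA addrCA subrr addr0. Qed.

Lemma half1 : 1 - 2^-1 = 2^-1 :> R.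
Proof. by rewrite {1}(splitr 1) mul1r addrK. Qed.

Variable C : set Y.
Hypothesis Hc : forall y z t, C y -> C z -> 0 <= t <= 1 -> C ((1 - t) *: y + t *: z).
Hypothesis Hpar : forall y z, C y -> C z -> parallel_pair y z.

Lemma Cmid {y z} : C y -> C z -> C (2^-1 *: (y + z)).
Proof.
move=> Cy Cz; have := Hc _ _ (2^-1) Cy Cz; rewrite half1 scalerDr; apply.
by rewrite invr_ge0 ler0n /= invf_le1 ?ler1n // ltr0n.
Qed.

Lemma lemA {y z} : C y -> C z -> ~ Pp y z ->
  y != 0 /\ exists k, 0 < k /\ z = - (k *: y).
Proof.
move=> Cy Cz nP.
have [//|N] := par_cases (Hpar _ _ Cy Cz).
have y0 : y != 0 by apply/negP => /eqP y0; apply: nP; rewrite y0; exact: Pp0l.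
have z0 : z != 0 by apply/negP => /eqP z0; apply: nP; rewrite z0 /Pp addr0 normr0 addr0.
have ny : 0 < `|y| by rewrite normr_gt0.
have nz : 0 < `|z| by rewrite normr_gt0.
set d := `|y| + `|z|.
have d0 : 0 < d by rewrite /d; lra.
set t := `|y| / d.
have t0 : 0 < t by rewrite /t divr_gt0.
have t1 : t < 1 by rewrite /t ltr_pdivrMr // mul1r /d; lra.
have td : t * d = `|y| by rewrite /t mulfVK // gt_eqF.
set m := (1 - t) *: y + t *: z.
have Cm : C m by apply: Hc => //; rewrite (ltW t0) (ltW t1).
split => //.
have [m0|m0] := eqVneq m 0.
  exists ((1 - t) / t); split; first by rewrite divr_gt0 // subr_gt0.
  have e : t *: z = - ((1 - t) *: y).
    by apply/eqP; rewrite -addr_eq0 addrC; apply/eqP.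
  by rewrite -(scalerK (lt0r_neq0 t0) z) e scalerN scalerA [_^-1 * _]mulrC.
exfalso.
have nm : 0 < `|m| by rewrite normr_gt0.
have ym : `|y - m| = `|y| by rewrite combo1 normrZ ger0_norm ?(ltW t0) // N.
have zm : `|z - m| = `|z|.
  have -> : m = (1 - (1 - t)) *: z + (1 - t) *: y by rewrite subKr addrC.
  rewrite combo1 normrZ ger0_norm ?subr_ge0 ?(ltW t1) // distrC N.
  rewrite mulrBl mul1r td /d; lra.
have Pym : Pp y m.
  case: (par_cases (Hpar _ _ Cy Cm)) => // h; move: h; rewrite ym; lra.
have Pzm : Pp z m.
  case: (par_cases (Hpar _ _ Cz Cm)) => // h; move: h; rewrite zm; lra.
have Ca := Cmid Cm Cy. have Cb := Cmid Cm Cz.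
have na : `|2^-1 *: (m + y)| = 2^-1 * (`|m| + `|y|).
  by rewrite normrZ ger0_norm ?invr_ge0 ?ler0n // (PpC Pym).
have nb : `|2^-1 *: (m + z)| = 2^-1 * (`|m| + `|z|).
  by rewrite normrZ ger0_norm ?invr_ge0 ?ler0n // (PpC Pzm).
have h2 : 0 < 2^-1 :> R by rewrite invr_gt0 ltr0n.
case: (par_cases (Hpar _ _ Ca Cb)); rewrite /Pp na nb.
  rewrite -scalerDr normrZ ger0_norm ?(ltW h2) // => h.
  apply: nP; apply/le_anti/andP; split; first exact: ler_normD.
  have e : m + y + (m + z) = (y + z) + (m + m).
    by rewrite addrACA addrC addrACA [y + _]addrC.
  have := ler_normD (y + z) (m + m); rewrite -e.
  have := ler_normD m m.
  have := h; rewrite /d; nra.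
rewrite -scalerBr [m + y]addrC addrKA normrZ ger0_norm ?(ltW h2) // N => h.
move: h; rewrite /d; nra.
Qed.

Lemma scalerI' {a : R} {u v : Y} : a != 0 -> a *: u = a *: v -> u = v.
Proof. by move=> a0 e; rewrite -(scalerK a0 u) e scalerK. Qed.

Lemma key (Hw : forall y, C y -> y != 0 -> exists2 w, C w & forall a, w != a *: y)
  y z : C y -> C z -> Pp y z.
Proof.
move=> Cy Cz; case: (pselect (Pp y z)) => // nP; exfalso.
have [y0 [k [k0 ez]]] := lemA Cy Cz nP.
have [w Cw nw] := Hw y Cy y0.
have Pyw : Pp y w.
  case: (pselect (Pp y w)) => // h; have [_ [k' [_ e]]] := lemA Cy Cw h.
  by move: (nw (-k')); rewrite e scaleNr eqxx.
have Pzw : Pp z w.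
  case: (pselect (Pp z w)) => // h; have [_ [k' [_ e]]] := lemA Cz Cw h.
  by move: (nw (k' * k)); rewrite e ez scalerN opprK scalerA eqxx.
have Cp := Cmid Cy Cw; have Cq := Cmid Cz Cw.
have h2 : 0 < 2^-1 :> R by rewrite invr_gt0 ltr0n.
have ny : 0 < `|y| by rewrite normr_gt0.
have nz : `|z| = k * `|y| by rewrite ez normrN normrZ gtr0_norm.
case: (pselect (Pp (2^-1 *: (y + w)) (2^-1 *: (z + w)))) => Ppq.
  move: Ppq; rewrite /Pp -scalerDr !normrZ gtr0_norm // Pyw Pzw nz.
  have -> : y + w + (z + w) = (1 - k) *: y + (w + w).
    by rewrite ez addrACA scalerBl scale1r.
  have := ler_normD ((1 - k) *: y) (w + w); rewrite normrZ.
  have := ler_normD w w.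
  have : `|1 - k| < 1 + k by rewrite ltr_norml; apply/andP; split; lra.
  move=> h1 h3 h4 h5.
  have h6 : `|(1 - k) *: y + (w + w)| = (1 + k) * `|y| + `|w| + `|w|.
    have h7 := mulfI (lt0r_neq0 h2). apply: h7. rewrite h5. lra.
  nra.
have [_ [k'' [k''0 e]]] := lemA Cp Cq Ppq.
have k1 : 1 + k'' != 0 by apply: lt0r_neq0; lra.
suff ew : w = ((k - k'') / (1 + k'')) *: y.
  by move: (nw ((k - k'') / (1 + k''))); rewrite -ew eqxx.
apply: (scalerI' k1); rewrite scalerA [_ * (_ / _)]mulrC divfK //.
rewrite scalerA mulrC -scalerA -scalerN in e.
have e2 := scalerI' (lt0r_neq0 h2) e.
rewrite ez in e2.
move/eqP: e2; rewrite addrC subr_eq => /eqP e2.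
rewrite scalerDl scale1r scalerBl {1}e2 scalerDr opprD.
by rewrite addrAC subrK addrC.
Qed.
End Gen.
Arguments F2 {R Y y z a b}.

Section Dual.
Variables (R : realType) (Y : normedModType R).
Implicit Types (y z w : Y) (g : Y -> R).

Definition islin g := forall (a : R) (u v : Y), g (a *: u + v) = a * g u + g v.

Lemma islin0 {g} : islin g -> g 0 = 0.
Proof. move=> h; have := h 1 0 0; rewrite scaler0 addr0 mul1r => e; lra. Qed.

Lemma islinZ {g} : islin g -> forall a u, g (a *: u) = a * g u.
Proof. by move=> h a u; have := h a u 0; rewrite addr0 islin0 // addr0. Qed.

Lemma islinD {g} : islin g -> forall u v, g (u + v) = g u + g v.
Proof. by move=> h u v; have := h 1 u v; rewrite scale1r mul1r. Qed.

Lemma islinN {g} : islin g -> forall u, g (- u) = - g u.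
Proof. by move=> h u; rewrite -scaleN1r islinZ // mulN1r. Qed.

Lemma dual_bound g : dual_unit Y g -> forall z, `|g z| <= `|z|.
Proof.
case=> lin cont n1.
have : \forall z \near (0 : Y), `|g 0 - g z| < 1.
  by have := cont 0; move/cvgrPdist_lt => h; apply: h; exact: ltr01.
case/nbhs_normP => d /= d0 Hd.
have lin' : islin g by [].
have g0 := islin0 lin'.
have d2 : 0 < d / 2 by rewrite divr_gt0.
set S := [set `|g z| | z in [set z : Y | `|z| <= 1]].
have ubS : ubound S ((d / 2)^-1 * 1).
  move=> _ [z /= z1 <-].
  have h : `|g 0 - g ((d / 2) *: z)| < 1.
    apply: Hd; rewrite /ball_ /= sub0r normrN normrZ gtr0_norm //.
    apply: (le_lt_trans (y := d / 2)); first by rewrite ler_piMr // ltW.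
    by rewrite ltr_pdivrMr // ltr_pMr // ltr1n.
  move: h; rewrite g0 sub0r normrN islinZ // normrM gtr0_norm // -ltr_pdivlMl //.
  exact: ltW.
have supS : sup S = 1 by [].
move=> z; have [->|z0] := eqVneq z 0; first by rewrite g0 !normr0.
have nz : 0 < `|z| by rewrite normr_gt0.
have : S `|g (`|z|^-1 *: z)|.
  exists (`|z|^-1 *: z); last by [].
  by rewrite /= normrZ ger0_norm ?invr_ge0 ?(ltW nz) // (mulVf (lt0r_neq0 nz)).
move/(ub_le_sup (ex_intro _ _ ubS)); rewrite supS islinZ // normrM ger0_norm ?invr_ge0 ?(ltW nz) //.
by rewrite ler_pdivrMl // mulr1.
Qed.
End Dual.
Arguments islin {R Y}.
Arguments islin0 {R Y g}.
Arguments islinZ {R Y g}.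
Arguments islinD {R Y g}.
Arguments islinN {R Y g}.
Arguments dual_bound {R Y g}.

Section HB.
Variables (R : realType) (Y : normedModType R) (y : Y).
Implicit Types (S : set Y) (phi : Y -> R) (w x z : Y).

Definition props S phi :=
  [/\ forall (a : R) u v, S u -> S v -> phi (a *: u + v) = a * phi u + phi v,
      forall u, S u -> phi u <= `|u| & phi y = `|y|].

Definition closedS S := [/\ S 0, S y & forall (a : R) u v, S u -> S v -> S (a *: u + v)].

Lemma props_sub {S S' phi} : S' `<=` S -> props S phi -> props S' phi.
Proof. by move=> sub [h1 h2 h3]; split => // *; [apply: h1 | apply: h2]; apply: sub. Qed.

Definition ext S w := [set z | exists x (t : R), S x /\ z = x + t *: w].

Lemma ext_closed S w : closedS S -> closedS (ext S w).
Proof.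
case=> S0 Sy Sl; split.
- by exists 0, 0; rewrite scale0r addr0.
- by exists y, 0; rewrite scale0r addr0.
- move=> a _ _ [x [t [Sx ->]]] [x' [t' [Sx' ->]]].
  exists (a *: x + x'), (a * t + t'); split; first exact: Sl.
  by rewrite scalerDr scalerA addrACA -scalerDl.
Qed.

Lemma decomp_unique {S w x t x' t'} : closedS S -> ~ S w -> S x -> S x' ->
  x + t *: w = x' + t' *: w -> x = x' /\ t = t'.
Proof.
case=> S0 Sy Sl nSw Sx Sx' e.
have e2 : (t - t') *: w = x' - x.
  have := congr1 (fun v => v - x - t' *: w) e.
  by rewrite /= [x + t *: w]addrC addrK addrAC addrK scalerBl.
have tt : t = t'.
  apply/eqP; rewrite -subr_eq0; apply/negPn/negP => h.
  apply: nSw; rewrite -(scalerK h w) e2 -[_ *: _]addr0; apply: (Sl) => //.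
  by rewrite addrC -scaleN1r; apply: (Sl).
split => //; move: e; rewrite tt; exact: addIr.
Qed.

Definition extf S phi w (c : R) (z : Y) : R :=
  match pselect (exists xt : Y * R, S xt.1 /\ z = xt.1 + xt.2 *: w) with
  | left H => let xt := proj1_sig (cid H) in phi xt.1 + xt.2 * c
  | right _ => 0 end.

Lemma extfE S phi w c x t : closedS S -> ~ S w -> S x ->
  extf S phi w c (x + t *: w) = phi x + t * c.
Proof.
move=> cS nSw Sx; rewrite /extf; case: pselect => [H|H]; last first.
  by exfalso; apply: H; exists (x, t).
case: (cid H) => -[x' t'] /= [Sx' e].
by have [-> ->] := decomp_unique cS nSw Sx Sx' e.
Qed.

Lemma phi0 {S phi} : S 0 -> props S phi -> phi 0 = 0.
Proof. by move=> S0 [h _ _]; have := h 1 0 0 S0 S0; rewrite scaler0 addr0 mul1r => e; lra. Qed.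

Lemma phiZ {S phi} a {x} : S 0 -> S x -> props S phi -> phi (a *: x) = a * phi x.
Proof.
move=> S0 Sx p; have := p; case=> h _ _.
by have := h a x 0 Sx S0; rewrite addr0 (phi0 S0 p) addr0.
Qed.

Lemma ext_step S phi w : closedS S -> props S phi -> exists phi', props (ext S w) phi'.
Proof.
move=> cS p; have := cS; case=> S0 Sy Sl.
have := p; case=> lin bnd py.
case: (pselect (S w)) => Sw.
  exists phi; apply: (props_sub _ p) => _ [x [t [Sx ->]]].
  by rewrite addrC; apply: (Sl).
set A := [set phi x - `|x - w| | x in S].
have key2 : forall x x', S x -> S x' -> phi x - `|x - w| <= `|x' + w| - phi x'.
  move=> x x' Sx Sx'; have := lin 1 x x' Sx Sx'; rewrite scale1r mul1r => e.
  have := bnd _ (Sl 1 x x' Sx Sx'); rewrite scale1r e => h.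
  have := ler_normD (x - w) (x' + w); rewrite addrACA addNr addr0.
  lra.
have A0 : A !=set0 by exists (phi 0 - `|0 - w|), 0.
have ubA : ubound A (`|0 + w| - phi 0) by move=> _ [x Sx <-]; exact: key2.
set c := sup A.
have hc1 : forall x, S x -> phi x - `|x - w| <= c.
  by move=> x Sx; apply: ub_le_sup; [exists (`|0 + w| - phi 0) | exists x].
have hc2 : forall x', S x' -> c <= `|x' + w| - phi x'.
  by move=> x' Sx'; apply: ge_sup A0 _ => _ [x Sx <-]; exact: key2.
exists (extf S phi w c); split.
- move=> a _ _ [x [t [Sx ->]]] [x' [t' [Sx' ->]]].
  have -> : a *: (x + t *: w) + (x' + t' *: w) = (a *: x + x') + (a * t + t') *: w.
    by rewrite scalerDr scalerA addrACA -scalerDl.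
  rewrite !extfE //; last exact: Sl.
  rewrite lin //; ring.
- move=> _ [x [t [Sx ->]]]; rewrite extfE //.
  have Sax : forall a, S (a *: x) by move=> a; rewrite -[_ *: x]addr0; exact: Sl.
  case: (ltgtP t 0) => [tn|tp|->]; last first.
    by rewrite mul0r addr0 scale0r addr0; exact: bnd.
  + have := hc2 _ (Sax t^-1); rewrite (phiZ _ S0 Sx p).
    have -> : t^-1 *: x + w = t^-1 *: (x + t *: w).
      by rewrite scalerDr scalerA mulVf ?scale1r // lt0r_neq0.
    rewrite normrZ gtr0_norm ?invr_gt0 // -mulrBr ler_pdivlMl // => h.
    lra.
  + have s0 : 0 < - t by rewrite oppr_gt0.
    have := hc1 _ (Sax (- t)^-1); rewrite (phiZ _ S0 Sx p).
    have -> : (- t)^-1 *: x - w = (- t)^-1 *: (x + t *: w).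
      rewrite scalerDr scalerA.
      have -> : (- t)^-1 * t = -1 by rewrite invrN mulNr mulVf // ltr0_neq0.
      by rewrite scaleN1r.
    rewrite normrZ gtr0_norm ?invr_gt0 // -mulrBr ler_pdivrMl // => h.
    lra.
- have := extfE S phi w c y 0 cS Sw Sy; rewrite scale0r addr0 mul0r addr0 => ->.
  exact: py.
Qed.

Hypothesis y0 : y != 0.

Definition S0 := [set z | exists a : R, z = a *: y].

Definition phi00 (z : Y) : R :=
  match pselect (exists a : R, z = a *: y) with
  | left H => proj1_sig (cid H) * `|y|
  | right _ => 0 end.

Lemma phi00E a : phi00 (a *: y) = a * `|y|.
Proof.
rewrite /phi00; case: pselect => [H|H]; last by exfalso; apply: H; exists a.
case: (cid H) => a' /= e; congr (_ * _).
have : (a - a') *: y = 0 by rewrite scalerBl e subrr.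
by move/eqP; rewrite scaler_eq0 (negbTE y0) orbF subr_eq0 => /eqP.
Qed.

Lemma S0_closed : closedS S0.
Proof.
split; [by exists 0; rewrite scale0r | by exists 1; rewrite scale1r |].
by move=> a _ _ [b ->] [c ->]; exists (a * b + c); rewrite scalerA scalerDl.
Qed.

Lemma S0_props : props S0 phi00.
Proof.
split.
- move=> a _ _ [b ->] [c ->]; rewrite scalerA -scalerDl !phi00E; ring.
- move=> _ [b ->]; rewrite phi00E normrZ; apply: ler_wpM2r => //; exact: ler_norm.
- by rewrite -{1}[y]scale1r phi00E mul1r.
Qed.

Fixpoint Sp (s : seq Y) : set Y := if s is w :: s' then ext (Sp s') w else S0.

Lemma Sp_ok s : closedS (Sp s) /\ exists phi, props (Sp s) phi.
Proof.
elim: s => [|w s [cS [phi p]]] /=; first by split; [exact: S0_closed | exists phi00; exact: S0_props].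
by split; [exact: (ext_closed _ w cS) | exact: (ext_step _ _ w cS p)].
Qed.

Lemma Sp_all n (e : 'I_n -> Y) (c : 'I_n -> R) (r : seq 'I_n) :
  Sp (map e r) (\sum_(i <- r) c i *: e i).
Proof.
elim: r => [|i r IH] /=; first by rewrite big_nil; exists 0; rewrite scale0r.
by rewrite big_cons; exists (\sum_(j <- r) c j *: e j), (c i); split => //; rewrite addrC.
Qed.

End HB.

Lemma HB_exists (R : realType) (Y : normedModType R) (y : Y) :
  finite_dim Y -> y != 0 -> exists g, Jset y g.
Proof.
move=> [n [e He]] y0.
have [_ [phi [lin bnd py]]] := @Sp_ok R Y y y0 (map e (index_enum 'I_n)).
have Sall : forall z, @Sp R Y y (map e (index_enum 'I_n)) z.
  by move=> z; have [c ->] := He z; exact: (@Sp_all R Y y).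
have lin' : islin phi by move=> a u v; apply: lin.
have bnd' : forall z, `|phi z| <= `|z|.
  move=> z; rewrite ler_norml; apply/andP; split; last exact: bnd.
  have := bnd (- z) (Sall _); rewrite islinN // normrN; lra.
exists phi; split => //; split => //.
- move=> x; apply/cvgrPdist_lt => eps e0; apply/nbhs_normP; exists eps => //= z /= hz.
  have -> : phi x - phi z = phi (x - z) by rewrite islinD // islinN.
  exact: le_lt_trans (bnd' _) hz.
- rewrite /dual_norm; apply/le_anti/andP; split.
    apply: ge_sup; first by exists `|phi 0|, 0 => //=; rewrite normr0.
    by move=> _ [z /= hz <-]; exact: le_trans (bnd' _) hz.
  have ny : 0 < `|y| by rewrite normr_gt0.
  apply: ub_le_sup.
    by exists 1 => _ [z /= hz <-]; exact: le_trans (bnd' _) hz.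
  exists (`|y|^-1 *: y); last by rewrite islinZ // py mulVf ?normr1 // lt0r_neq0.
  by rewrite /= normrZ ger0_norm ?invr_ge0 ?(ltW ny) // mulVf // lt0r_neq0.
Qed.


Section Interior.
Variables (R : realType) (X Y : normedModType R) (T : {linear X -> Y}) (F : set X).
Variables (n : nat) (e : 'I_n -> Y).
Hypothesis He : forall z : Y, exists c : 'I_n -> R, z = \sum_(i < n) c i *: e i.

Definition L (c : 'rV[R]_n) : Y := \sum_i c 0 i *: e i.

Lemma L_sum k (a : 'I_k -> R) (r : 'I_k -> 'rV[R]_n) :
  L (\sum_j a j *: r j) = \sum_j a j *: L (r j).
Proof.
rewrite /L; under eq_bigr => i _ do rewrite summxE scaler_suml.
rewrite exchange_big /=; apply: eq_bigr => j _; rewrite scaler_sumr.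
by apply: eq_bigr => i _; rewrite mxE scalerA.
Qed.

Lemma L_onto z : exists c, z = L c.
Proof.
have [c ->] := He z; exists (\row_i c i); rewrite /L.
by apply: eq_bigr => i _; rewrite mxE.
Qed.

Lemma span_fin : (exists2 x, F x & T x != 0) ->
  exists k (x : 'I_k -> X), [/\ (0 < k)%N, (forall j, F (x j)) &
    forall v, F v -> exists a : 'I_k -> R, T v = \sum_j a j *: T (x j)].
Proof.
move=> [v0 Fv0 Tv0].
pose P r := `[< exists k (x : 'I_k -> X) (M : 'M[R]_(k, n)),
   (forall j, F (x j) /\ T (x j) = L (row j M)) /\ \rank M = r >].
have P0 : P 0%N.
  apply/asboolP; exists 0%N, (fun _ => v0), 0; split; last exact: mxrank0.
  by case.
have Pub : forall r, P r -> (r <= n)%N.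
  by move=> r /asboolP [k [x [M [_ <-]]]]; exact: rank_leq_col.
case: (@ex_maxnP P n (ex_intro _ 0%N P0) Pub) => r /asboolP [k [x [M [hx hr]]]] rmax.
have span : forall v, F v -> exists a : 'I_k -> R, T v = \sum_j a j *: T (x j).
  move=> v Fv; have [c ec] := L_onto (T v).
  have : (c <= M)%MS.
    apply/negPn/negP => nc.
    pose x' (j : 'I_(k + 1)) := match fintype.split j with inl j' => x j' | inr _ => v end.
    have : P (\rank (col_mx M c)).
      apply/asboolP; exists (k + 1)%N, x', (col_mx M c); split => // j.
      rewrite -(splitK j); case: (fintype.split j) => j'; rewrite /x' unsplitK /=.
        by rewrite rowKu; exact: hx.
      by rewrite rowKd row_id.
    move/rmax; rewrite -hr.
    have : (M < col_mx M c)%MS.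
      by rewrite ltmxE -addsmxE addsmxSl col_mx_sub submx_refl /=.
    by rewrite ltmxErank => /andP [_ h1] h2; move: (leq_trans h1 h2); rewrite ltnn.
  case/submxP => D eD; exists (fun j => D 0 j).
  rewrite ec eD mulmx_sum_row L_sum; apply: eq_bigr => j _.
  by have [_ ->] := hx j.
exists k, x; split => //; last by move=> j; have [] := hx j.
case: k x M hx hr rmax span => // x M hx hr rmax span.
by have [a ea] := span _ Fv0; move: Tv0; rewrite ea big_ord0 eqxx.
Qed.
End Interior.

Lemma conv_comb (R : realType) (X : normedModType R) (F : set X) : Defs.convex_set X F ->
  forall k (x : 'I_k -> X) (lam : 'I_k -> R), (forall j, F (x j)) ->
  (forall j, 0 <= lam j) -> \sum_j lam j = 1 -> F (\sum_j lam j *: x j).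
Proof.
move=> cF; elim=> [|k IH] x lam Fx l0 l1.
  by move: l1; rewrite big_ord0 => /eqP; rewrite eq_sym oner_eq0.
rewrite big_ord_recr /=; move: l1; rewrite big_ord_recr /= => l1.
set La := \sum_(j < k) lam (widen_ord (leqnSn k) j) in l1 *.
have La0 : 0 <= La by apply: sumr_ge0 => j _.
have [Lz|Lp] := eqVneq La 0.
  have z := psumr_eq0P (fun i _ => l0 (widen_ord (leqnSn k) i)) Lz.
  rewrite big1 ?add0r; last by move=> j _; rewrite z // scale0r.
  have -> : lam ord_max = 1 by move: l1; rewrite Lz add0r.
  by rewrite scale1r.
have Lpos : 0 < La by rewrite lt_neqAle eq_sym Lp La0.
have := IH (fun j => x (widen_ord (leqnSn k) j))
  (fun j => lam (widen_ord (leqnSn k) j) / La) (fun j => Fx _)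
  (fun j => divr_ge0 (l0 _) La0).
rewrite -mulr_suml mulfV // => /(_ erefl) Fz.
have := cF _ _ (lam ord_max) Fz (Fx ord_max).
have -> : 1 - lam ord_max = La by rewrite -l1 addrK.
rewrite scaler_sumr.
have -> : \sum_(i < k) La *: (lam (widen_ord (leqnSn k) i) / La *: x (widen_ord (leqnSn k) i))
   = \sum_(i < k) lam (widen_ord (leqnSn k) i) *: x (widen_ord (leqnSn k) i).
  by apply: eq_bigr => j _; rewrite scalerA mulrC divfK.
apply; rewrite l0 /=.
have : 0 <= La by [].
move: l1; lra.
Qed.

Lemma interior (R : realType) (X Y : normedModType R) (T : {linear X -> Y}) (F : set X) :
  Defs.convex_set X F -> finite_dim Y -> (exists2 x, F x & T x != 0) ->
  exists u, F u /\ forall v, F v -> exists f (a b : R),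
    [/\ F f, 0 < a, 0 < b & T u = a *: T v + b *: T f].
Proof.
move=> cF [n [e He]] ex.
have [k [x [k0 Fx span]]] := @span_fin R X Y T F n e He ex.
set K := k%:R : R.
have K0 : 0 < K by rewrite ltr0n.
have sK : \sum_(j < k) K^-1 = 1.
  by rewrite sumr_const card_ord -mulr_natr mulVf // lt0r_neq0.
exists (\sum_j K^-1 *: x j); split.
  by apply: conv_comb => // j; rewrite invr_ge0 ltW.
move=> v Fv; have [a ea] := span v Fv.
set S := \sum_j `|a j|.
have aS : forall j, a j <= S.
  move=> j; apply: (le_trans (ler_norm _)); rewrite /S (bigD1 j) //=.
  rewrite lerDl; exact: sumr_ge0.
have S0 : 0 <= S by apply: sumr_ge0.
have KS : 0 < 1 + K * S by apply: ltr_wpDr => //; apply: mulr_ge0 => //; exact: ltW.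
set s := (1 + K * S)^-1.
have s0 : 0 < s by rewrite invr_gt0.
have sKS : s * (1 + K * S) = 1 by rewrite mulVf // lt0r_neq0.
set bet := fun j => (1 + s) / K - s * a j.
have betp : forall j, 0 < bet j.
  move=> j; rewrite /bet subr_gt0 ltr_pdivlMr //.
  have h1 : s * a j * K <= s * S * K.
    by apply: ler_wpM2r; [exact: ltW | apply: ler_wpM2l; [exact: ltW | exact: aS]].
  have h2 : s * S * K = 1 - s by rewrite -sKS; ring.
  lra.
set sig := \sum_j bet j.
have sig0 : 0 < sig.
  rewrite /sig (bigD1 (Ordinal k0)) //=.
  have := betp (Ordinal k0); have : 0 <= \sum_(i < k | i != Ordinal k0) bet i.
    by apply: sumr_ge0 => i _; exact: ltW.
  lra.
exists (\sum_j (bet j / sig) *: x j), (s / (1 + s)), (sig / (1 + s)); split.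
- apply: conv_comb => //; first by move=> j; apply: divr_ge0; apply: ltW.
  by rewrite -mulr_suml mulfV // lt0r_neq0.
- by apply: divr_gt0 => //; lra.
- by apply: divr_gt0 => //; lra.
have lT : forall (c : 'I_k -> R) (z : 'I_k -> X),
    T (\sum_j c j *: z j) = \sum_j c j *: T (z j).
  by move=> c z; rewrite linear_sum; apply: eq_bigr => i _; rewrite linearZ.
rewrite ea !lT !scaler_sumr -big_split; apply: eq_bigr => j _ /=.
rewrite !scalerA -scalerDl; congr (_ *: _).
rewrite /bet; field.
by rewrite !lt0r_neq0 //; lra.
Qed.

Lemma normD_same (R : realType) (a b : R) : 0 <= a * b -> `|a + b| = `|a| + `|b|.
Proof.
move=> hab; case: (leP 0 a) => ha; case: (leP 0 b) => hb.
- by rewrite !ger0_norm // addr_ge0.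
- have : a * b <= 0 by nra. move=> h.
  have -> : a = 0 by nra. by rewrite normr0 !add0r.
- have -> : b = 0 by nra. by rewrite normr0 !addr0.
- by rewrite (ltr0_norm ha) (ltr0_norm hb) ltr0_norm ?opprD //; lra.
Qed.

Lemma normB_opp (R : realType) (a b : R) : a * b < 0 -> `|a - b| = `|a| + `|b|.
Proof.
move=> hab; rewrite normD_same ?normrN // mulrN; lra.
Qed.

Theorem mainTheorem11 (R : realType) (X Y : completeNormedModType R)
  (T : {linear X -> Y}) (F : set X) :
  finite_dim X -> finite_dim Y -> continuous T ->
  is_face F -> (exists2 x, F x & T x != 0) ->
  ((forall x y, F x -> F y -> parallel_pair (T x) (T y)) <->
   (span_dim1 (T @` F) \/
    exists u, [/\ F u, T u != 0 &
      forall v, F v -> T v != 0 -> Jset (T u) `<=` Jset (T v)])).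
Proof.
move=> fdX fdY cT [Fne Fsph cF Fface] ex.
split.
- move=> Hpar.
  set C := T @` F.
  have HcC : forall y z t, C y -> C z -> 0 <= t <= 1 -> C ((1 - t) *: y + t *: z).
    move=> _ _ t [x Fx <-] [x' Fx' <-] ht; exists ((1 - t) *: x + t *: x').
      exact: cF.
    by rewrite linearD !linearZ.
  have HparC : forall y z, C y -> C z -> parallel_pair y z.
    by move=> _ _ [x Fx <-] [x' Fx' <-]; exact: Hpar.
  case: (pselect (span_dim1 C)) => [h|nsd]; [by left | right].
  have Hw : forall y, C y -> y != 0 -> exists2 w, C w & forall a, w != a *: y.
    move=> y Cy y0; case: (pselect (exists2 w, C w & forall a, w != a *: y)) => // nw.
    exfalso; apply: nsd; exists y; split => //.
    have allm : forall w, C w -> exists a, w = a *: y.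
      move=> w Cw; case: (pselect (exists a, w = a *: y)) => // na.
      exfalso; apply: nw; exists w => // a; apply/eqP => e; apply: na; by exists a.
    apply/seteqP; split.
    + move=> z [m [c [v [hv ->]]]].
      have : exists a, \sum_(i < m) c i *: v i = a *: y.
        apply: (big_ind (fun z => exists a, z = a *: y)).
        * by exists 0; rewrite scale0r.
        * by move=> _ _ [a ->] [b ->]; exists (a + b); rewrite scalerDl.
        * move=> i _; have [a ->] := allm _ (hv i).
          by exists (c i * a); rewrite scalerA.
      by case=> a ->; exists a.
    + move=> _ [a _ <-]; exists 1%N, (fun _ => a), (fun _ => y); split => //.
      by rewrite big_ord1.
  have Pall := @key R Y C HcC HparC Hw.
  have [u [Fu Hu]] := @interior R X Y T F cF fdY ex.
  have CT : forall x, F x -> C (T x) by move=> x Fx; exists x.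
  have [v0 Fv0 Tv0] := ex.
  have Tu0 : T u != 0.
    have [f [a [b [Ff a0 b0 eu]]]] := Hu v0 Fv0.
    apply/negP => /eqP Tu0.
    have := F2 (Pall _ _ (CT _ Fv0) (CT _ Ff)) (ltW a0) (ltW b0).
    rewrite -eu Tu0 normr0 => h.
    have : 0 < `|T v0| by rewrite normr_gt0.
    have : 0 <= `|T f| by [].
    move: h; nra.
  exists u; split => // v Fv Tv0' g [gdu gu].
  have [f [a [b [Ff a0 b0 eu]]]] := Hu v Fv.
  split => //.
  have bd := dual_bound gdu.
  have lin : islin g by case: gdu.
  have nu : `|T u| = a * `|T v| + b * `|T f|.
    by rewrite eu (F2 (Pall _ _ (CT _ Fv) (CT _ Ff))) // ltW.
  have gT : g (T u) = a * g (T v) + b * g (T f) by rewrite eu (islinD lin) !(islinZ lin).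
  have h1 : g (T v) <= `|T v| := le_trans (ler_norm _) (bd _).
  have h2 : g (T f) <= `|T f| := le_trans (ler_norm _) (bd _).
  move: gT; rewrite gu nu => h.
  apply/le_anti; rewrite h1 /=.
  nra.
- case => [[e [e0 se]] | [u [Fu Tu0 HJ]]] x y Fx Fy.
  + have mem : forall z, F z -> exists a, T z = a *: e.
      move=> z Fz.
      have : span_set Y (T @` F) (T z).
        exists 1%N, (fun _ => 1), (fun _ => T z); split; first by move=> _; exists z.
        by rewrite big_ord1 scale1r.
      by rewrite se => -[a _ <-]; exists a.
    have [a ->] := mem _ Fx; have [b ->] := mem _ Fy.
    case: (leP 0 (a * b)) => hab.
      exists 1; split; first by rewrite normr1.
      by rewrite scale1r -scalerDl !normrZ normD_same // mulrDl.
    exists (-1); split; first by rewrite normrN normr1.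
    by rewrite scaleN1r -scalerBl !normrZ normB_opp // mulrDl.
  + have [Tx0|Tx0] := eqVneq (T x) 0.
      by exists 1; rewrite normr1 Tx0 add0r normr0 add0r scale1r.
    have [Ty0|Ty0] := eqVneq (T y) 0.
      by exists 1; rewrite normr1 Ty0 scaler0 addr0 normr0 addr0.
    have [g Jg] := @HB_exists R Y (T u) fdY Tu0.
    have [gdu gx] := HJ x Fx Tx0 g Jg.
    have [_ gy] := HJ y Fy Ty0 g Jg.
    have lin : islin g by case: gdu.
    exists 1; split; first by rewrite normr1.
    rewrite scale1r; apply/le_anti; rewrite ler_normD /=.
    rewrite -gx -gy -(islinD lin).
    exact: le_trans (ler_norm _) (dual_bound gdu _).
Qed.
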